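(* Let $m\ge1$ and $L=\mathcal{R}^*$. For $a\in\mathcal{R}$ the Lee weight of $ev(a)=(Tr(ax))_{x\in \mathcal{R}^*}$ is: (a) $0$ if $a=0$; (b) $2\cdot3^{3m}$ if $a=(u-1)^2a_3$ with $a_3\in\mathbb{F}_{3^m}^*$; (c) $2(3^{3m}-3^{2m})$ if $a\in\mathcal{R}\setminus\langle (u-1)^2\rangle$.
   Context: Let $R=\mathbb{F}_3[u]/(u^3-1)$ and $\mathcal{R}=\mathbb{F}_{3^m}[u]/(u^3-1)=\mathbb{F}_{3^m}+u\mathbb{F}_{3^m}+u^2\mathbb{F}_{3^m}$. Every element of $\mathcal{R}$ is uniquely $x_1+x_2(u-1)+x_3(u-1)^2$ with $x_i\in\mathbb{F}_{3^m}$; $\mathcal{R}^*$ (the units) consists of those with $x_1\neq0$. $\langle (u-1)^2\rangle=\{(u-1)^2a_3:a_3\in\mathbb{F}_{3^m}\}$. $Tr:\mathcal{R}\to R$ is $Tr(a+ub+u^2c)=tr(a)+u\,tr(b)+u^2tr(c)$, with $tr$ the absolute trace $\mathbb{F}_{3^m}\to\mathbb{F}_3$. The Gray map $\phi:R\to\mathbb{F}_3^3$ is $\phi(a'+ub'+u^2c')=(a',b',c')$, extended coordinatewise to $R^n\to\mathbb{F}_3^{3n}$; the Lee weight $w_L(v)$ of $v\in R^n$ is the Hamming weight of $\phi(v)$. *)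

(* Defs.v *)
From HB Require Import structures.
From mathcomp Require Import all_boot all_order all_algebra all_field.
Set Implicit Arguments. Unset Strict Implicit. Unset Printing Implicit Defensive.
Import GRing.Theory.
Local Open Scope ring_scope.

(* The ring  calR = F[u]/(u^3-1), F = F_{3^m}, an element a + u b + u^2 c
   is represented by the triple ((a, b), c). *)
Definition calR (F : finFieldType) := (F * F * F)%type.

Definition oneR (F : finFieldType) : calR F := (1, 0, 0).

(* multiplication using u^3 = 1 *)
Definition mulR (F : finFieldType) (x y : calR F) : calR F :=
  let: (a, b, c) := x in let: (a', b', c') := y in
  (a * a' + b * c' + c * b', a * b' + b * a' + c * c', a * c' + b * b' + c * a').

Definition isUnitR (F : finFieldType) (x : calR F) : bool :=
  [exists y : calR F, mulR x y == oneR F].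

(* x1 + x2 (u-1) + x3 (u-1)^2, with (u-1) = -1 + u and (u-1)^2 = 1 - 2u + u^2 *)
Definition eltR (F : finFieldType) (x1 x2 x3 : F) : calR F :=
  (x1 - x2 + x3, x2 - x3 *+ 2, x3).

(* absolute trace F_{3^m} -> F_3, with values in the prime subfield of F *)
Definition tr (F : finFieldType) (m : nat) (x : F) : F :=
  \sum_(i < m) x ^+ (3 ^ i)%N.

Definition TrR (F : finFieldType) (m : nat) (x : calR F) : calR F :=
  let: (a, b, c) := x in (tr m a, tr m b, tr m c).

Definition gray (F : finFieldType) (x : calR F) : 3.-tuple F :=
  let: (a, b, c) := x in [tuple a; b; c].

Definition hamming (F : finFieldType) (n : nat) (v : n.-tuple F) : nat :=
  count (fun z => z != 0) v.

Definition lee_ev (F : finFieldType) (m : nat) (a : calR F) : nat :=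
  \sum_(x : calR F | isUnitR x) hamming (gray (TrR m (mulR a x))).

(* Main.v *)
Require Import Defs.
From HB Require Import structures.
From mathcomp Require Import all_boot all_order all_algebra all_field.
From mathcomp Require Import ring zify.
Set Implicit Arguments. Unset Strict Implicit. Unset Printing Implicit Defensive.
Import GRing.Theory.
Local Open Scope ring_scope.

Lemma char3 (F : finFieldType) (m : nat) : #|F| = (3 ^ m)%N -> 3%N \in [pchar F].
Proof. by move=> h; apply: (card_finPcharP h). Qed.

Lemma three0 (F : finFieldType) : 3%N \in [pchar F] -> 3%:R = 0 :> F.
Proof. by move=> h; apply: pcharf0 h. Qed.

Definition sumR (F : finFieldType) (x : calR F) : F := x.1.1 + x.1.2 + x.2.

Lemma sumR_mul (F : finFieldType) (x y : calR F) : sumR (mulR x y) = sumR x * sumR y.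
Proof. by case: x => [[a b] c]; case: y => [[a' b'] c']; rewrite /sumR /=; ring. Qed.

Lemma isUnitRE (F : finFieldType) (x : calR F) : 3%:R = 0 :> F ->
  isUnitR x = (sumR x != 0).
Proof.
move=> h3; apply/existsP/idP.
  case=> y /eqP hy; have := sumR_mul x y; rewrite hy /sumR /oneR /= addr0 addr0.
  by move=> e; apply/eqP => e0; move: e; rewrite e0 mul0r; apply/eqP; rewrite oner_eq0.
case: x => [[a b] c]; rewrite /sumR /= => hs.
set t := ((a + b + c) ^+ 3)^-1.
have ht : (a + b + c) ^+ 3 * t = 1 by rewrite mulfV // expf_neq0.
exists ((a^+2 + 2 * b * c) * t, (2 * a * b + c^+2) * t, (2 * a * c + b^+2) * t).
rewrite /mulR /oneR; apply/eqP; congr (_, _, _).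
- rewrite -[RHS]ht.
  transitivity (((a + b + c) ^+ 3 - 3%:R * (a^+2*b + a^+2*c + a*b^+2 + b^+2*c + a*c^+2 + b*c^+2)) * t); first by ring.
  by rewrite h3 mul0r subr0.
- transitivity ((3%:R * (a^+2*b + a*c^+2 + b^+2*c)) * t); first by ring.
  by rewrite h3 !mul0r.
- transitivity ((3%:R * (a^+2*c + a*b^+2 + b*c^+2)) * t); first by ring.
  by rewrite h3 !mul0r.
Qed.

Lemma isUnitR_elt (F : finFieldType) (x1 x2 x3 : F) : 3%:R = 0 :> F ->
  isUnitR (eltR x1 x2 x3) = (x1 != 0).
Proof. by move=> h; rewrite isUnitRE // /sumR /eltR /=; congr (_ != _); ring. Qed.

Lemma tr_cube (F : finFieldType) (n : nat) (x : F) :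
  #|F| = (3 ^ n.+1)%N -> 3%N \in [pchar F] -> tr n.+1 x ^+ 3 = tr n.+1 x.
Proof.
move=> hF ch; rewrite /tr -(pFrobenius_autE ch) rmorph_sum /=.
under eq_bigr => i _ do rewrite pFrobenius_autE -exprM -expnSr.
rewrite big_ord_recr big_ord_recl /= -hF expf_card expn0 expr1 /=.
by rewrite addrC.
Qed.

Lemma tr_vals (F : finFieldType) (n : nat) (x : F) :
  #|F| = (3 ^ n.+1)%N -> 3%N \in [pchar F] ->
  [\/ tr n.+1 x = 0, tr n.+1 x = 1 | tr n.+1 x = -1].
Proof.
move=> hF ch; have := tr_cube x hF ch; set t := tr _ x => h.
have : t * (t - 1) * (t + 1) = 0.
  by transitivity (t ^+ 3 - t); [ring | rewrite h subrr].
move/eqP; rewrite !mulf_eq0 subr_eq0 addr_eq0 => /orP [/orP [] | ] /eqP.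
- by constructor 1. - by constructor 2. - by constructor 3.
Qed.

Definition Ptr (F : finFieldType) (n : nat) : {poly F} := \sum_(i < n) 'X^(3 ^ i).

Lemma size_Ptr (F : finFieldType) (n : nat) : size (Ptr F n.+1) = (3 ^ n).+1.
Proof.
elim: n => [|n IH]; first by rewrite /Ptr big_ord1 expn0 size_polyX.
rewrite /Ptr big_ord_recr /= -/(Ptr F n.+1) addrC size_polyDl size_polyXn //.
by rewrite IH ltnS ltn_exp2l.
Qed.

Lemma fiber_le (F : finFieldType) (n : nat) (v : F) :
  (#|[set x : F | tr n.+1 x == v]| <= 3 ^ n)%N.
Proof.
set p := Ptr F n.+1 - v%:P.
have sp : size p = (3 ^ n).+1.
  rewrite /p size_polyDl size_Ptr // size_polyN.
  by apply: leq_ltn_trans (size_polyC_leq1 _) _; rewrite ltnS expn_gt0.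
have p0 : p != 0 by rewrite -size_poly_eq0 sp.
have := max_poly_roots p0 (rs := enum [set x : F | tr n.+1 x == v]).
rewrite -cardE sp ltnS; apply; last exact: enum_uniq.
apply/allP => x; rewrite mem_enum inE => /eqP hx.
rewrite /root /p hornerD hornerN hornerC /Ptr horner_sum.
under eq_bigr => i _ do rewrite hornerXn.
by rewrite -/(tr n.+1 x) hx subrr.
Qed.

Lemma one_neq_m1 (F : finFieldType) : 3%:R = 0 :> F -> (1 : F) != -1.
Proof.
move=> h3; apply/eqP => e; have : (1 : F) = 0.
  have h2 : (1 + 1 : F) = 0 by rewrite {2}e subrr.
  by transitivity (3%:R - (1 + 1) : F); [ring | rewrite h3 h2 subr0].
by apply/eqP; rewrite oner_eq0.
Qed.

Lemma sum_card (F : finFieldType) (P : pred F) : (\sum_(x : F) (P x : nat) = #|[set x | P x]|)%N.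
Proof.
rewrite -sum1_card [RHS]big_mkcond /=; apply: eq_bigr => x _; rewrite inE; by case: (P x).
Qed.

Lemma countN (F : finFieldType) (n : nat) :
  #|F| = (3 ^ n.+1)%N -> 3%N \in [pchar F] ->
  (\sum_(y : F) (tr n.+1 y != 0%R : nat) = 2 * 3 ^ n)%N.
Proof.
move=> hF ch; have h3 : 3%:R = 0 :> F by apply: pcharf0 ch.
have n1 : (1 : F) == -1 = false by apply/negbTE/one_neq_m1.
have n1' : (-1 : F) == 1 = false by rewrite eq_sym.
have n01 : (0 : F) == 1 = false by rewrite eq_sym oner_eq0.
have n10 : (1 : F) == 0 = false by rewrite oner_eq0.
have n0m : (0 : F) == -1 = false by rewrite eq_sym oppr_eq0 oner_eq0.
have nm0 : (-1 : F) == 0 = false by rewrite oppr_eq0 oner_eq0.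
have e1 : (\sum_(y : F) (tr n.+1 y != 0%R : nat) =
   \sum_(y : F) (tr n.+1 y == 1%R : nat) + \sum_(y : F) (tr n.+1 y == (-1)%R : nat))%N.
  rewrite -big_split /=; apply: eq_bigr => y _.
  by case: (tr_vals y hF ch) => ->; rewrite ?eqxx ?(n1,n1',n01,n10,n0m,nm0).
have e2 : (3 ^ n.+1 = \sum_(y : F) (tr n.+1 y == 0%R : nat) +
   \sum_(y : F) (tr n.+1 y == 1%R : nat) + \sum_(y : F) (tr n.+1 y == (-1)%R : nat))%N.
  rewrite -!big_split -hF -sum1_card /=; apply: eq_bigr => y _.
  by case: (tr_vals y hF ch) => ->; rewrite ?eqxx ?(n1,n1',n01,n10,n0m,nm0).
have b0 := @fiber_le F n 0; have b1 := @fiber_le F n 1; have bm := @fiber_le F n (-1).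
rewrite !sum_card in e1 e2 *; rewrite e1.
rewrite expnS in e2.
set X := (3 ^ n)%N in b0 b1 bm e2 *. set c0 := #|[set x : F | tr n.+1 x == 0]| in b0 e2 *. set c1 := #|[set x : F | tr n.+1 x == 1]| in b1 e2 *. set c2 := #|[set x : F | tr n.+1 x == -1]| in bm e2 *.
clearbody X c0 c1 c2; lia.
Qed.

Lemma tr0 (F : finFieldType) n : tr n (0 : F) = 0.
Proof. by rewrite /tr big1 // => i _; rewrite expr0n expn_eq0. Qed.

Lemma countA (F : finFieldType) (n : nat) (c e : F) :
  #|F| = (3 ^ n.+1)%N -> 3%N \in [pchar F] -> e != 0 ->
  (\sum_(y : F) (tr n.+1 (c + e * y)%R != 0%R : nat) = 2 * 3 ^ n)%N.
Proof.
move=> hF ch he; rewrite -(countN hF ch).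
have inj : injective (fun y : F => c + e * y) by move=> a b /addrI /(mulfI he).
by rewrite [RHS](reindex_inj inj).
Qed.

Lemma sum3c (F : finFieldType) (G : F -> F -> F -> nat) :
  (\sum_(p : F * F * F | p.1.1 != 0%R) G p.1.1 p.1.2 p.2 =
   \sum_(x1 : F | x1 != 0%R) \sum_(x2 : F) \sum_(x3 : F) G x1 x2 x3)%N.
Proof.
rewrite big_mkcond [RHS]big_mkcond /=.
rewrite -(pair_bigA _ (fun q z => if q.1 != 0 then G q.1 q.2 z else 0%N)) /=.
rewrite -(pair_bigA _ (fun x y => \sum_(z : F) if x != 0 then G x y z else 0%N)) /=.
apply: eq_bigr => x1 _; case: (x1 != 0) => //.
by rewrite big1 // => x2 _; rewrite big1.
Qed.

Definition ginv (F : finFieldType) (x : calR F) : F * F * F :=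
  (x.1.1 + x.1.2 + x.2, x.1.2 + x.2 *+ 2, x.2).

Lemma reindex_units (F : finFieldType) (G : calR F -> nat) :
  3%:R = 0 :> F ->
  (\sum_(x : calR F | isUnitR x) G x =
   \sum_(x1 : F | x1 != 0%R) \sum_(x2 : F) \sum_(x3 : F) G (eltR x1 x2 x3))%N.
Proof.
move=> h3; rewrite -sum3c.
rewrite (reindex (fun p : F * F * F => eltR p.1.1 p.1.2 p.2)) /=.
  by apply: eq_bigl => p; rewrite isUnitR_elt.
apply: onW_bij; exists (@ginv F).
  by case=> [[a b] c]; rewrite /ginv /eltR /=; congr (_, _, _); ring.
by case=> [[a b] c]; rewrite /ginv /eltR /=; congr (_, _, _); ring.
Qed.

Lemma sum_nz_const (F : finFieldType) (C : nat) :
  (\sum_(x1 : F | x1 != 0%R) C = #|F|.-1 * C)%N.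
Proof. by rewrite -(cardC1 (0 : F)) -sum_nat_const. Qed.

Lemma count_form (F : finFieldType) (n : nat) (l : calR F -> F) (k d e : F) :
  #|F| = (3 ^ n.+1)%N -> 3%N \in [pchar F] ->
  (forall x1 x2 x3, l (eltR x1 x2 x3) = k * x1 + d * x2 + e * x3) ->
  (d != 0) || (e != 0) ->
  (\sum_(x : calR F | isUnitR x) (tr n.+1 (l x) != 0%R : nat) =
    (3 ^ n.+1).-1 * (3 ^ n.+1 * (2 * 3 ^ n)))%N.
Proof.
move=> hF ch hl hde; have h3 : 3%:R = 0 :> F by apply: pcharf0 ch.
rewrite reindex_units // -hF -sum_nz_const; apply: eq_bigr => x1 _.
under eq_bigr => x2 _ do under eq_bigr => x3 _ do rewrite hl.
case/orP: hde => [hd | he].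
  rewrite exchange_big /= -[X in (_ = X * _)%N]sum1_card big_distrl /=.
  apply: eq_bigr => x3 _; rewrite mul1n.
  under eq_bigr => x2 _ do rewrite addrAC.
  exact: countA.
rewrite -[X in (_ = X * _)%N]sum1_card big_distrl /=.
apply: eq_bigr => x2 _; rewrite mul1n; exact: countA.
Qed.

Lemma count_form0 (F : finFieldType) (n : nat) (l : calR F -> F) (k : F) :
  #|F| = (3 ^ n.+1)%N -> 3%N \in [pchar F] ->
  (forall x1 x2 x3, l (eltR x1 x2 x3) = k * x1) -> k != 0 ->
  (\sum_(x : calR F | isUnitR x) (tr n.+1 (l x) != 0%R : nat) =
    3 ^ n.+1 * 3 ^ n.+1 * (2 * 3 ^ n))%N.
Proof.
move=> hF ch hl hk; have h3 : 3%:R = 0 :> F by apply: pcharf0 ch.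
rewrite reindex_units //.
under eq_bigr => x1 _ do under eq_bigr => x2 _ do under eq_bigr => x3 _ do rewrite hl.
have e1 : (\sum_(x1 : F | x1 != 0%R) (tr n.+1 (k * x1)%R != 0%R : nat) = 2 * 3 ^ n)%N.
  rewrite -(countA 0 hF ch hk) [RHS](bigD1 0) //= mulr0 add0r tr0 eqxx add0n.
  by apply: eq_bigr => x _; rewrite add0r.
rewrite -e1 big_distrr /=; apply: eq_bigr => x1 _.
rewrite -hF -mulnA.
under eq_bigr => x2 _ do rewrite sum_nat_const.
by rewrite sum_nat_const.
Qed.

Lemma lee_split (F : finFieldType) m (a : calR F) :
  lee_ev m a =
  (\sum_(x : calR F | isUnitR x) (tr m (mulR a x).1.1 != 0%R : nat) +
   \sum_(x : calR F | isUnitR x) (tr m (mulR a x).1.2 != 0%R : nat) +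
   \sum_(x : calR F | isUnitR x) (tr m (mulR a x).2 != 0%R : nat))%N.
Proof.
rewrite /lee_ev -!big_split; apply: eq_bigr => x _ /=.
by case: (mulR a x) => [[p q] r] /=; rewrite /hamming /= addn0 addnA.
Qed.

Lemma coord0 (F : finFieldType) (p q r x1 x2 x3 : F) :
  (mulR (p, q, r) (eltR x1 x2 x3)).1.1 = p * x1 + (r - p) * x2 + (p + q - 2 * r) * x3.
Proof. by rewrite /mulR /eltR /=; ring. Qed.
Lemma coord1 (F : finFieldType) (p q r x1 x2 x3 : F) :
  (mulR (p, q, r) (eltR x1 x2 x3)).1.2 = q * x1 + (p - q) * x2 + (q + r - 2 * p) * x3.
Proof. by rewrite /mulR /eltR /=; ring. Qed.
Lemma coord2 (F : finFieldType) (p q r x1 x2 x3 : F) :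
  (mulR (p, q, r) (eltR x1 x2 x3)).2 = r * x1 + (q - r) * x2 + (p - 2 * q + r) * x3.
Proof. by rewrite /mulR /eltR /=; ring. Qed.

Lemma constR (F : finFieldType) (p : F) : 3%:R = 0 :> F -> (p, p, p) = eltR 0 0 p.
Proof.
move=> h3; rewrite /eltR; congr (_, _, _); first by ring.
by transitivity (p - 3%:R * p); [rewrite h3 mul0r subr0 | ring].
Qed.

Lemma m2 (F : finFieldType) (p : F) : 3%:R = 0 :> F -> 0 - p *+ 2 = p.
Proof. by move=> h3; transitivity (p - 3%:R * p); [ring | rewrite h3 mul0r subr0]. Qed.

Lemma z3 (F : finFieldType) (u w : F) : 3%:R = 0 :> F -> u = 3%:R * w -> u = 0.
Proof. by move=> h3 ->; rewrite h3 mul0r. Qed.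

Unset Implicit Arguments.
Theorem theorem5p5 (F : finFieldType) (m : nat) (hm : (1 <= m)%N)
  (hF : #|F| = (3 ^ m)%N) :
  [/\ lee_ev m (0 : calR F) = 0%N,
      (forall a3 : F, a3 != 0 ->
         lee_ev m (eltR 0 0 a3) = (2 * 3 ^ (3 * m))%N)
    & (forall a : calR F, (forall a3 : F, a <> eltR 0 0 a3) ->
         lee_ev m a = (2 * (3 ^ (3 * m) - 3 ^ (2 * m)))%N)].
Proof.
case: m hm hF => [//|n] _ hF.
have ch : 3%N \in [pchar F] by apply: (card_finPcharP hF).
have h3 : 3%:R = 0 :> F by apply: pcharf0 ch.
have eX : (3 ^ (3 * n.+1) = 27 * (3 ^ n) ^ 3 /\ 3 ^ (2 * n.+1) = 9 * (3 ^ n) ^ 2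
           /\ 3 ^ n.+1 = 3 * 3 ^ n)%N.
  rewrite (mulnC 3) (mulnC 2) !expnM !expnS !expnMn.
  by rewrite !expn0 !muln1; split; [|split] => //; ring.
have X1 : (1 <= 3 ^ n)%N by rewrite expn_gt0.
move: eX X1; set X := (3 ^ n)%N => -[e3 [e2 e1]] X1.
split.
- rewrite /lee_ev big1 // => x _; case: x => [[p q] r].
  by rewrite /mulR /= !mul0r !addr0 tr0 /hamming /= eqxx.
- move=> a3 ha3; rewrite -(constR a3 h3) lee_split.
  rewrite (count_form0 (l := fun x => (mulR (a3, a3, a3) x).1.1) (k := a3) hF ch); last first.
  - by []. - by move=> x1 x2 x3; apply: etrans (coord0 _ _ _ _ _ _) _; ring.
  rewrite (count_form0 (l := fun x => (mulR (a3, a3, a3) x).1.2) (k := a3) hF ch); last first.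
  - by []. - by move=> x1 x2 x3; apply: etrans (coord1 _ _ _ _ _ _) _; ring.
  rewrite (count_form0 (l := fun x => (mulR (a3, a3, a3) x).2) (k := a3) hF ch); last first.
  - by []. - by move=> x1 x2 x3; apply: etrans (coord2 _ _ _ _ _ _) _; ring.
  rewrite -/X e3 e1; clearbody X; ring.
- case=> [[p q] r] hne; rewrite lee_split.
  rewrite (count_form (l := fun x => (mulR (p, q, r) x).1.1)
    (k := p) (d := r - p) (e := p + q - 2 * r) hF ch); last first.
  - rewrite -negb_and; apply/negP => /andP [/eqP hd /eqP he].
    apply: (hne p); rewrite -constR //; congr (_, _, _).
    + transitivity ((p + q - 2 * r) + 2 * (r - p) + p); first by ring.
      by rewrite he hd; ring.
    + by transitivity ((r - p) + p); [ring | rewrite hd add0r].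
  - by move=> x1 x2 x3; apply: coord0.
  rewrite (count_form (l := fun x => (mulR (p, q, r) x).1.2)
    (k := q) (d := p - q) (e := q + r - 2 * p) hF ch); last first.
  - rewrite -negb_and; apply/negP => /andP [/eqP hd /eqP he].
    apply: (hne p); rewrite -constR //; congr (_, _, _).
    + by transitivity (p - (p - q)); [ring | rewrite hd subr0].
    + transitivity ((q + r - 2 * p) + 2 * (p - q) - (p - q) + p); first by ring.
      by rewrite he hd; ring.
  - by move=> x1 x2 x3; apply: coord1.
  rewrite (count_form (l := fun x => (mulR (p, q, r) x).2)
    (k := r) (d := q - r) (e := p - 2 * q + r) hF ch); last first.
  - rewrite -negb_and; apply/negP => /andP [/eqP hd /eqP he].
    apply: (hne p); rewrite -constR //; congr (_, _, _).
    + transitivity (p - (p - 2 * q + r) - (q - r)); first by ring.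
      by rewrite he hd; ring.
    + transitivity (p - (p - 2 * q + r) - 2 * (q - r)); first by ring.
      by rewrite he hd; ring.
  - by move=> x1 x2 x3; apply: coord2.
  rewrite -/X e3 e2 e1; clearbody X.
  have -> : (27 * X ^ 3 - 9 * X ^ 2 = 9 * X ^ 2 * (3 * X).-1)%N.
    by rewrite -subn1 mulnBr muln1; congr (_ - _)%N; ring.
  ring.
Qed.
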